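(* For all $n_1,n_2\in\mathbb N$, with $m=\max(n_1,n_2)$, there are an $\mathrm{NRC}$ expression $\widehat{\mathsf{Pair}}(x,y)$ with $x:\mathfrak U_{n_1}$, $y:\mathfrak U_{n_2}$ and output type $\mathfrak U_{m+2}$, and $\mathrm{NRC}[\mathsf{get}]$ expressions $\hat\pi_i(x)$ from $\mathfrak U_{m+2}$ to $\mathfrak U_{n_i}$ ($i=1,2$), such that $\hat\pi_1(\widehat{\mathsf{Pair}}(a_1,a_2))=a_1$ and $\hat\pi_2(\widehat{\mathsf{Pair}}(a_1,a_2))=a_2$ for all $a_1,a_2$. Furthermore there is a $\Delta_0$ formula $\mathrm{Im}_{\widehat{\mathsf{Pair}}}(x)$ such that $\mathrm{Im}_{\widehat{\mathsf{Pair}}}(a)$ holds iff $a=\widehat{\mathsf{Pair}}(a_1,a_2)$ for some $a_1,a_2$, and in that case $\widehat{\mathsf{Pair}}(\hat\pi_1(a),\hat\pi_2(a))=a$.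
   Context: Monadic types: $\mathfrak U_0:=\mathfrak U$ (a set of atoms), $\mathfrak U_{n+1}:=\mathsf{Set}(\mathfrak U_n)$ (all subsets). $\Delta_0$ formulas: built from $t=_{\mathfrak U}u$, $t\neq_{\mathfrak U}u$, $\top,\bot$ with $\wedge,\vee$ and bounded quantifiers $\forall x\in t$, $\exists x\in t$. $\mathrm{NRC}[\mathsf{get}]$: typed expressions built from variables, $\langle\rangle$, pairing, projections, $\emptyset$, singleton $\{E\}$, $\cup$, $\setminus$, big union $\bigcup\{E_1\mid x\in E_2\}$, and $\mathsf{get}_T(E)$ (the unique element of a singleton $E$, a fixed default element otherwise); $\mathrm{NRC}$ is the fragment without $\mathsf{get}$. *)

(* Defs.v *)
From Stdlib Require Import List ClassicalEpsilon.
Import ListNotations.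
Set Implicit Arguments.

Inductive ty : Type :=
| TU : ty
| TUnit : ty
| TProd : ty -> ty -> ty
| TSet : ty -> ty.

(* Semantics over a type of atoms U: Set(T) = all subsets (predicates);
   equality of sets is extensional thanks to propext/funext. *)
Fixpoint sem (U : Type) (t : ty) : Type :=
  match t with
  | TU => U
  | TUnit => unit
  | TProd a b => (sem U a * sem U b)%type
  | TSet a => sem U a -> Prop
  end.

Fixpoint Un (n : nat) : ty :=
  match n with
  | 0 => TU
  | S k => TSet (Un k)
  end.

Inductive var : list ty -> ty -> Type :=
| VZ : forall G T, var (T :: G) T
| VS : forall G T S, var G T -> var (S :: G) T.

Fixpoint env (U : Type) (G : list ty) : Type :=
  match G with
  | [] => unit
  | T :: G' => (sem U T * env U G')%type
  end.

Fixpoint lookup (U : Type) G T (v : var G T) : env U G -> sem U T :=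
  match v in var G T return env U G -> sem U T with
  | VZ _ _ => fun rho => fst rho
  | VS _ v' => fun rho => @lookup U _ _ v' (snd rho)
  end.

Inductive expr : list ty -> ty -> Type :=
| EVar : forall G T, var G T -> expr G T
| EUnit : forall G, expr G TUnit
| EPair : forall G A B, expr G A -> expr G B -> expr G (TProd A B)
| EFst : forall G A B, expr G (TProd A B) -> expr G A
| ESnd : forall G A B, expr G (TProd A B) -> expr G B
| EEmpty : forall G T, expr G (TSet T)
| ESing : forall G T, expr G T -> expr G (TSet T)
| EUnion : forall G T, expr G (TSet T) -> expr G (TSet T) -> expr G (TSet T)
| EDiff : forall G T, expr G (TSet T) -> expr G (TSet T) -> expr G (TSet T)
(* EBigUnion body e  =  \bigcup { body | x \in e },  x bound in body *)
| EBigUnion : forall G S T, expr (S :: G) (TSet T) -> expr G (TSet S) -> expr G (TSet T)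
| EGet : forall G T, expr G (TSet T) -> expr G T.

Fixpoint no_get G T (e : expr G T) : Prop :=
  match e with
  | @EVar _ _ _ => True
  | @EUnit _ => True
  | EPair a b => @no_get _ _ a /\ @no_get _ _ b
  | EFst a => @no_get _ _ a
  | ESnd a => @no_get _ _ a
  | @EEmpty _ _ => True
  | ESing a => @no_get _ _ a
  | EUnion a b => @no_get _ _ a /\ @no_get _ _ b
  | EDiff a b => @no_get _ _ a /\ @no_get _ _ b
  | EBigUnion b a => @no_get _ _ b /\ @no_get _ _ a
  | @EGet _ _ _ => False
  end.

(* get: the unique element of a singleton, a fixed default otherwise. *)
Definition get_sem (U : Type) (T : ty) (dflt : sem U T) (A : sem U (TSet T)) : sem U T :=
  match excluded_middle_informative (exists x : sem U T, A = (fun y => y = x)) with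
  | left h => proj1_sig (constructive_indefinite_description _ h)
  | right _ => dflt
  end.

Fixpoint eval (U : Type) (dflt : forall T, sem U T) G T (e : expr G T)
  : env U G -> sem U T :=
  match e in expr G T return env U G -> sem U T with
  | @EVar _ _ v => fun rho => @lookup U _ _ v rho
  | @EUnit _ => fun _ => tt
  | EPair a b => fun rho => (@eval U dflt _ _ a rho, @eval U dflt _ _ b rho)
  | EFst a => fun rho => fst (@eval U dflt _ _ a rho)
  | ESnd a => fun rho => snd (@eval U dflt _ _ a rho)
  | @EEmpty _ _ => fun _ _ => False
  | ESing a => fun rho y => y = @eval U dflt _ _ a rho
  | EUnion a b => fun rho y => @eval U dflt _ _ a rho y \/ @eval U dflt _ _ b rho y
  | EDiff a b => fun rho y => @eval U dflt _ _ a rho y /\ ~ @eval U dflt _ _ b rho y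
  | EBigUnion b a => fun rho y =>
      exists x, @eval U dflt _ _ a rho x /\ @eval U dflt _ _ b (x, rho) y
  | EGet a => fun rho => get_sem (dflt _) (@eval U dflt _ _ a rho)
  end.

Inductive fml : list ty -> Type :=
| FEq : forall G, var G TU -> var G TU -> fml G
| FNeq : forall G, var G TU -> var G TU -> fml G
| FTrue : forall G, fml G
| FFalse : forall G, fml G
| FAnd : forall G, fml G -> fml G -> fml G
| FOr : forall G, fml G -> fml G -> fml G
| FAll : forall G T, var G (TSet T) -> fml (T :: G) -> fml G
| FEx : forall G T, var G (TSet T) -> fml (T :: G) -> fml G.

Fixpoint holds (U : Type) G (f : fml G) : env U G -> Prop :=
  match f in fml G return env U G -> Prop with
  | FEq u v => fun rho => @lookup U _ _ u rho = @lookup U _ _ v rho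
  | FNeq u v => fun rho => @lookup U _ _ u rho <> @lookup U _ _ v rho
  | @FTrue _ => fun _ => True
  | @FFalse _ => fun _ => False
  | FAnd a b => fun rho => @holds U _ a rho /\ @holds U _ b rho
  | FOr a b => fun rho => @holds U _ a rho \/ @holds U _ b rho
  | FAll t a => fun rho => forall x, @lookup U _ _ t rho x -> @holds U _ a (x, rho)
  | FEx t a => fun rho => exists x, @lookup U _ _ t rho x /\ @holds U _ a (x, rho)
  end.

Arguments lookup {U G T} v _.
Arguments eval {U} dflt {G T} e _.
Arguments holds {U G} f _.
Arguments no_get {G T} e.
Arguments get_sem {U T} dflt A.

(* Main.v *)
Require Import Defs.
From Stdlib Require Import List ClassicalEpsilon FunctionalExtensionality PropExtensionality Classical PeanoNat.
Import ListNotations.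

Notation Z0 := (VZ _ _).
Notation Sv v := (VS _ v).

Lemma pred_ext {A} (p q : A -> Prop) : (forall x, p x <-> q x) -> p = q.
Proof. intro H; apply functional_extensionality; intro x; apply propositional_extensionality; auto. Qed.

Lemma get_sing U T d (x : sem U T) : get_sem d (fun y => y = x) = x.
Proof.
  unfold get_sem. destruct excluded_middle_informative as [h|h].
  - destruct (constructive_indefinite_description _ h) as [y Hy]; simpl.
    assert (E: (x = x) = (x = y)) by exact (f_equal (fun P => P x) Hy).
    symmetry; rewrite <- E; reflexivity.
  - exfalso; apply h; eauto.
Qed.

Fixpoint eqf (k : nat) : forall G, var G (Un k) -> var G (Un k) -> fml G :=
  match k return forall G, var G (Un k) -> var G (Un k) -> fml G with
  | 0 => fun G u v => FEq u v
  | S k' => fun G u v =>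
     FAnd (@FAll G (Un k') u (FEx (Sv v) (eqf k' _ (Sv Z0) Z0)))
          (@FAll G (Un k') v (FEx (Sv u) (eqf k' _ Z0 (Sv Z0))))
  end.

Lemma eqf_ok k : forall U G (u v : var G (Un k)) (rho : env U G),
  holds (eqf k G u v) rho <-> lookup u rho = lookup v rho.
Proof.
  induction k; intros U G u v rho; simpl; [tauto|].
  split.
  - intros [H1 H2]. apply pred_ext; intro x; split; intro Hx.
    + destruct (H1 x Hx) as [y [Hy E]]. apply IHk in E. simpl in E. subst; auto.
    + destruct (H2 x Hx) as [y [Hy E]]. apply IHk in E. simpl in E. subst; auto.
  - intro E; split; intros x Hx; exists x; (split; [rewrite E in *; auto|apply IHk; reflexivity]).
Qed.
Definition LiftSpec (n m : nat) :=
  exists (L : forall G, expr G (Un n) -> expr G (Un m))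
         (R : forall G, expr G (Un m) -> expr G (Un n))
         (I : forall G, var G (Un m) -> fml G),
    (forall G e, no_get e -> no_get (L G e)) /\
    forall U (dflt : forall T, sem U T), exists f : sem U (Un n) -> sem U (Un m),
      (forall G (e : expr G (Un n)) rho, eval dflt (L G e) rho = f (eval dflt e rho)) /\
      (forall G (e : expr G (Un m)) rho x, eval dflt e rho = f x -> eval dflt (R G e) rho = x) /\
      (forall G (v : var G (Un m)) rho, holds (I G v) rho <-> exists x, lookup v rho = f x).

Lemma lift_ex n m : n <= m -> LiftSpec n m.
Proof.
  induction 1.
  - exists (fun G e => e), (fun G e => e), (fun G v => FTrue G). split; auto.
    intros U dflt. exists (fun x => x). repeat split; auto. intros; simpl; eauto.
  - destruct IHle as (L & R & I & HL & HS).
    exists (fun G e => ESing (L G e)), (fun G e => R G (EGet e)),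
      (fun G v => @FEx G (Un m) v (FAnd (I _ Z0) (@FAll _ (Un m) (Sv v) (eqf m _ (Sv Z0) Z0)))).
    split. { intros G e He; simpl; auto. }
    intros U dflt. destruct (HS U dflt) as (f & Hf1 & Hf2 & Hf3).
    exists (fun x y => y = f x). split; [|split].
    + intros; simpl; rewrite Hf1; reflexivity.
    + intros G e rho x He. apply Hf2. change (get_sem (dflt _) (eval dflt e rho) = f x). rewrite He. apply get_sing.
    + intros G v rho; simpl. split.
      * intros (z & Hz & HI & Hall). apply Hf3 in HI. destruct HI as [x Hx]. simpl in Hx. exists x.
        apply pred_ext; intro y; split; intro Hy.
        -- specialize (Hall y Hy). apply eqf_ok in Hall. simpl in Hall. congruence.
        -- subst. exact Hz.
      * intros [x Hx]. exists (f x). rewrite Hx. split; [reflexivity|split].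
        -- apply Hf3. exists x; reflexivity.
        -- intros y Hy. apply eqf_ok. simpl. congruence.
Qed.
Section Main.
Variable m : nat.

Definition BU {G} (a : var G (Un (S (S m)))) : expr G (Un (S m)) :=
  @EBigUnion G (Un (S m)) (Un m) (EVar Z0) (EVar a).

Definition Inter {G} (a : var G (Un (S (S m)))) : expr G (Un (S m)) :=
  @EBigUnion G (Un m) (Un m)
    (EDiff (ESing (EVar Z0))
       (@EBigUnion _ (Un (S m)) (Un m) (EDiff (ESing (EVar (Sv Z0))) (EVar Z0)) (EVar (Sv a))))
    (BU a).

Definition S2 {G} (a : var G (Un (S (S m)))) : expr G (Un (S m)) :=
  EUnion (EDiff (BU a) (Inter a))
    (EDiff (Inter a) (@EBigUnion G (Un m) (Un m) (Inter (Sv a)) (EDiff (BU a) (Inter a)))).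

Definition PairSem {U} (x y : sem U (Un m)) : sem U (Un (S (S m))) :=
  fun w => w = (fun t => t = x) \/ w = (fun t => t = x \/ t = y).

Arguments BU : simpl never.
Arguments Inter : simpl never.

Lemma BU_ok U dflt G a (rho : env U G) x y : lookup a rho = PairSem x y ->
  eval dflt (BU a) rho = fun t => t = x \/ t = y.
Proof.
  intro Ha. unfold BU; cbn [eval]. rewrite Ha. apply pred_ext; intro t; unfold PairSem; split.
  - intros (w & [->| ->] & Hw); simpl in Hw; auto.
  - intros [->| ->]; [exists (fun t => t = x)|exists (fun t => t = x \/ t = y)]; simpl; auto.
Qed.

Lemma Inter_ok U dflt G a (rho : env U G) x y : lookup a rho = PairSem x y ->
  eval dflt (Inter a) rho = fun t => t = x.
Proof.
  intro Ha. pose proof (BU_ok _ dflt _ a rho _ _ Ha) as HB.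
  assert (HBt : forall t, eval dflt (BU a) rho t <-> (t = x \/ t = y)) by (intro; rewrite HB; tauto).
  assert (HA : forall w, lookup a rho w <-> PairSem x y w) by (intro; rewrite Ha; tauto).
  unfold Inter; cbn [eval].
  apply pred_ext; intro t; split.
  - intros (z & Hz & Et & Hn). simpl in Et. subst z. apply NNPP; intro Hne. apply Hn.
    exists (fun t => t = x). split; [apply HA; left; reflexivity|]. simpl. auto.
  - intros ->. exists x. split; [apply HBt; auto|]. simpl. split; auto.
    intros (w & Hw & _ & Hw2). apply HA in Hw. destruct Hw as [-> | ->]; apply Hw2; auto.
Qed.

Lemma S2_ok U dflt G a (rho : env U G) x y : lookup a rho = PairSem x y ->
  eval dflt (S2 a) rho = fun t => t = y.
Proof.
  intro Ha. pose proof (BU_ok _ dflt _ a rho _ _ Ha) as HB.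
  assert (HBt : forall t, eval dflt (BU a) rho t <-> (t = x \/ t = y)) by (intro; rewrite HB; tauto).
  pose proof (Inter_ok _ dflt _ a rho _ _ Ha) as HI.
  assert (HIt : forall t, eval dflt (Inter a) rho t <-> (t = x)) by (intro; rewrite HI; tauto).
  assert (HI2 : forall z, eval dflt (Inter (VS (Un m) a)) (z, rho) = fun t => t = x)
    by (intro z; exact (Inter_ok _ dflt _ (VS (Un m) a) (z, rho) _ _ Ha)).
  unfold S2; cbn [eval].
  apply pred_ext; intro t. split.
  - intros [[H1 H2]|[H1 H2]].
    + apply HBt in H1. rewrite HIt in H2. tauto.
    + apply HIt in H1. subst t. destruct (classic (y = x)) as [E|E]; auto. exfalso; apply H2.
      exists y. split; [split; [apply HBt; auto| rewrite HIt; auto]|].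
      rewrite HI2. reflexivity.
  - intros ->. destruct (classic (y = x)) as [E|E].
    + right. split; [apply HIt; auto|]. intros (z & [Hz1 Hz2] & _). apply HBt in Hz1. rewrite HIt in Hz2. destruct Hz1; subst; tauto.
    + left. split; [apply HBt; auto|]. rewrite HIt; auto.
Qed.
End Main.
Section Fmls.
Variable m : nat.

Definition isS {G} (w : var G (Un (S m))) (z : var G (Un m)) : fml G :=
  FAnd (@FAll G (Un m) w (eqf m _ Z0 (Sv z))) (@FEx G (Un m) w (eqf m _ Z0 (Sv z))).
Definition isP {G} (w : var G (Un (S m))) (z z2 : var G (Un m)) : fml G :=
  FAnd (@FAll G (Un m) w (FOr (eqf m _ Z0 (Sv z)) (eqf m _ Z0 (Sv z2))))
    (FAnd (@FEx G (Un m) w (eqf m _ Z0 (Sv z))) (@FEx G (Un m) w (eqf m _ Z0 (Sv z2)))).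
Definition EQf {G} (a : var G (Un (S (S m)))) (z1 z2 : var G (Un m)) : fml G :=
  FAnd (@FAll G (Un (S m)) a (FOr (isS Z0 (Sv z1)) (isP Z0 (Sv z1) (Sv z2))))
    (FAnd (@FEx G (Un (S m)) a (isS Z0 (Sv z1))) (@FEx G (Un (S m)) a (isP Z0 (Sv z1) (Sv z2)))).

Lemma isS_ok U G w z (rho : env U G) :
  holds (isS w z) rho <-> lookup w rho = (fun t => t = lookup z rho).
Proof.
  unfold isS; cbn [holds]. split.
  - intros [H1 [t [Ht E]]]. apply eqf_ok in E; simpl in E.
    apply pred_ext; intro u; split; intro Hu.
    + specialize (H1 u Hu); apply eqf_ok in H1; exact H1.
    + rewrite Hu, <- E; exact Ht.
  - intro E. assert (HE : forall u, lookup w rho u <-> u = lookup z rho) by (intro; rewrite E; tauto).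
    split; [intros u Hu; apply eqf_ok; simpl; apply HE; auto|].
    exists (lookup z rho); split; [apply HE; auto| apply eqf_ok; reflexivity].
Qed.

Lemma isP_ok U G w z z2 (rho : env U G) :
  holds (isP w z z2) rho <-> lookup w rho = (fun t => t = lookup z rho \/ t = lookup z2 rho).
Proof.
  unfold isP; cbn [holds]. split.
  - intros [H1 [[t [Ht E]] [t2 [Ht2 E2]]]]. apply eqf_ok in E; simpl in E. apply eqf_ok in E2; simpl in E2.
    apply pred_ext; intro u; split; intro Hu.
    + specialize (H1 u Hu). destruct H1 as [H1|H1]; apply eqf_ok in H1; auto.
    + destruct Hu as [Hu|Hu]; [rewrite Hu, <- E; exact Ht|rewrite Hu, <- E2; exact Ht2].
  - intro E. assert (HE : forall u, lookup w rho u <-> u = lookup z rho \/ u = lookup z2 rho)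
      by (intro; rewrite E; tauto).
    split; [intros u Hu; apply HE in Hu; destruct Hu; [left|right]; apply eqf_ok; simpl; auto|].
    split; [exists (lookup z rho)|exists (lookup z2 rho)];
      (split; [apply HE; auto| apply eqf_ok; reflexivity]).
Qed.

Lemma EQf_ok U G a z1 z2 (rho : env U G) :
  holds (EQf a z1 z2) rho <-> lookup a rho = PairSem m (lookup z1 rho) (lookup z2 rho).
Proof.
  unfold EQf; cbn [holds]. split.
  - intros [H1 [[t [Ht E]] [t2 [Ht2 E2]]]]. apply isS_ok in E; simpl in E. apply isP_ok in E2; simpl in E2.
    apply pred_ext; intro u; split; intro Hu.
    + specialize (H1 u Hu). unfold PairSem.
      destruct H1 as [H1|H1]; [apply isS_ok in H1|apply isP_ok in H1]; auto.
    + destruct Hu as [Hu|Hu]; [rewrite Hu, <- E; exact Ht|rewrite Hu, <- E2; exact Ht2].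
  - intro E. assert (HE : forall u, lookup a rho u <-> PairSem m (lookup z1 rho) (lookup z2 rho) u)
      by (intro; rewrite E; tauto).
    split; [intros u Hu; apply HE in Hu; destruct Hu; [left; apply isS_ok|right; apply isP_ok]; simpl; auto|].
    split; [exists (fun t => t = lookup z1 rho)|exists (fun t => t = lookup z1 rho \/ t = lookup z2 rho)].
    + split; [apply HE; left; reflexivity| apply isS_ok; reflexivity].
    + split; [apply HE; right; reflexivity| apply isP_ok; reflexivity].
Qed.
End Fmls.
Lemma main_gen n1 n2 m : n1 <= m -> n2 <= m ->
  exists (Pair : expr [Un n1; Un n2] (Un (S (S m))))
         (pi1 : expr [Un (S (S m))] (Un n1))
         (pi2 : expr [Un (S (S m))] (Un n2))
         (Im : fml [Un (S (S m))]),
    no_get Pair /\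
    forall (U : Type) (dflt : forall T, sem U T),
      (forall (a1 : sem U (Un n1)) (a2 : sem U (Un n2)),
          eval dflt pi1 (eval dflt Pair (a1, (a2, tt)), tt) = a1 /\
          eval dflt pi2 (eval dflt Pair (a1, (a2, tt)), tt) = a2) /\
      (forall a : sem U (Un (S (S m))),
          (holds Im (a, tt) <->
             exists (a1 : sem U (Un n1)) (a2 : sem U (Un n2)),
               a = eval dflt Pair (a1, (a2, tt))) /\
          (holds Im (a, tt) ->
             eval dflt Pair (eval dflt pi1 (a, tt), (eval dflt pi2 (a, tt), tt)) = a)).
Proof.
  intros h1 h2.
  destruct (lift_ex _ _ h1) as (L1 & R1 & I1 & HL1 & HS1).
  destruct (lift_ex _ _ h2) as (L2 & R2 & I2 & HL2 & HS2).
  set (X := @EVar [Un n1; Un n2] (Un n1) Z0).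
  set (Y := @EVar [Un n1; Un n2] (Un n2) (Sv Z0)).
  exists (EUnion (ESing (ESing (L1 _ X))) (ESing (EUnion (ESing (L1 _ X)) (ESing (L2 _ Y))))).
  exists (R1 _ (EGet (Inter m (Z0 : var [Un (S (S m))] _)))).
  exists (R2 _ (EGet (S2 m (Z0 : var [Un (S (S m))] _)))).
  exists (@FEx _ (Un (S m)) Z0 (@FEx _ (Un m) Z0 (@FEx _ (Un (S m)) (Sv (Sv Z0))
            (@FEx _ (Un m) Z0 (FAnd (I1 _ (Sv (Sv Z0))) (FAnd (I2 _ Z0)
               (EQf m (Sv (Sv (Sv (Sv Z0)))) (Sv (Sv Z0)) Z0))))))).
  split. { simpl. repeat split; [apply HL1|apply HL1|apply HL2]; exact I. }
  intros U dflt.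
  destruct (HS1 U dflt) as (f1 & Hf1 & Hg1 & Hi1).
  destruct (HS2 U dflt) as (f2 & Hf2 & Hg2 & Hi2).
  set (P := EUnion _ _).
  assert (HP : forall a1 a2, eval dflt P (a1, (a2, tt)) = PairSem m (f1 a1) (f2 a2)).
  { intros a1 a2. unfold P, PairSem. cbn [eval]. rewrite !Hf1, !Hf2. reflexivity. }
  assert (Hproj : forall a1 a2,
    eval dflt (R1 _ (EGet (Inter m (Z0 : var [Un (S (S m))] _)))) (eval dflt P (a1, (a2, tt)), tt) = a1 /\
    eval dflt (R2 _ (EGet (S2 m (Z0 : var [Un (S (S m))] _)))) (eval dflt P (a1, (a2, tt)), tt) = a2).
  { intros a1 a2. split.
    - apply Hg1. etransitivity; [|apply (get_sing _ _ (dflt _) (f1 a1))].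
      exact (f_equal (get_sem (dflt _)) (Inter_ok m _ dflt [Un (S (S m))] Z0 (eval dflt P (a1, (a2, tt)), tt) (f1 a1) (f2 a2) (HP a1 a2))).
    - apply Hg2. etransitivity; [|apply (get_sing _ _ (dflt _) (f2 a2))].
      exact (f_equal (get_sem (dflt _)) (S2_ok m _ dflt [Un (S (S m))] Z0 (eval dflt P (a1, (a2, tt)), tt) (f1 a1) (f2 a2) (HP a1 a2))). }
  split; [exact Hproj|].
  intro a.
  assert (Hiff : holds (@FEx [Un (S (S m))] (Un (S m)) Z0 (@FEx _ (Un m) Z0 (@FEx _ (Un (S m)) (Sv (Sv Z0))
            (@FEx _ (Un m) Z0 (FAnd (I1 _ (Sv (Sv Z0))) (FAnd (I2 _ Z0)
               (EQf m (Sv (Sv (Sv (Sv Z0)))) (Sv (Sv Z0)) Z0))))))) (a, tt) <->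
      exists a1 a2, a = eval dflt P (a1, (a2, tt))).
  { cbn [holds]. split.
    - intros (w1 & Hw1 & z1 & Hz1 & w2 & Hw2 & z2 & Hz2 & HI1 & HI2 & HE).
      apply Hi1 in HI1. apply Hi2 in HI2. apply EQf_ok in HE.
      destruct HI1 as [x1 E1]. destruct HI2 as [x2 E2]. simpl in E1, E2, HE.
      exists x1, x2. rewrite HP, <- E1, <- E2. exact HE.
    - intros (a1 & a2 & Ea). rewrite HP in Ea.
      assert (HA : forall w, a w <-> PairSem m (f1 a1) (f2 a2) w) by (intro; rewrite Ea; tauto).
      exists (fun t => t = f1 a1). split; [apply HA; left; reflexivity|].
      exists (f1 a1). split; [reflexivity|].
      exists (fun t => t = f1 a1 \/ t = f2 a2). split; [apply HA; right; reflexivity|].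
      exists (f2 a2). split; [right; reflexivity|].
      split; [apply Hi1; exists a1; reflexivity|].
      split; [apply Hi2; exists a2; reflexivity|].
      apply EQf_ok. simpl. exact Ea. }
  split; [exact Hiff|].
  intro H. apply Hiff in H. destruct H as (a1 & a2 & ->).
  destruct (Hproj a1 a2) as [E1 E2]. exact (f_equal2 (fun u v => eval dflt P (u, (v, tt))) E1 E2).
Qed.

Theorem mainTheorem6 (n1 n2 : nat) :
  exists (Pair : expr [Un n1; Un n2] (Un (S (S (Nat.max n1 n2)))))
         (pi1 : expr [Un (S (S (Nat.max n1 n2)))] (Un n1))
         (pi2 : expr [Un (S (S (Nat.max n1 n2)))] (Un n2))
         (Im : fml [Un (S (S (Nat.max n1 n2)))]),
    no_get Pair /\
    forall (U : Type) (dflt : forall T, sem U T),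
      (forall (a1 : sem U (Un n1)) (a2 : sem U (Un n2)),
          eval dflt pi1 (eval dflt Pair (a1, (a2, tt)), tt) = a1 /\
          eval dflt pi2 (eval dflt Pair (a1, (a2, tt)), tt) = a2) /\
      (forall a : sem U (Un (S (S (Nat.max n1 n2)))),
          (holds Im (a, tt) <->
             exists (a1 : sem U (Un n1)) (a2 : sem U (Un n2)),
               a = eval dflt Pair (a1, (a2, tt))) /\
          (holds Im (a, tt) ->
             eval dflt Pair (eval dflt pi1 (a, tt), (eval dflt pi2 (a, tt), tt)) = a)).
Proof.
  apply main_gen; [apply Nat.le_max_l | apply Nat.le_max_r].
Qed.
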